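(* Let $\|\cdot\|$ be a $C^2$ and strictly convex norm on $\mathbb{R}^2$. There exists a constant $C>0$ depending only on $\|\cdot\|$ such that for every interval $I\subset\mathbb{R}$ and every $\|\cdot\|$-self-contracted curve $\gamma:I\to\mathbb{R}^2$, $$\ell(\gamma)\leq C\,\mathrm{diam}(K(\gamma)),$$ where $\ell(\gamma)$ is the length of $\gamma$, $K(\gamma)$ is the closed convex hull of the image $\gamma(I)$, and $\mathrm{diam}$ is the diameter. In particular, every bounded $\|\cdot\|$-self-contracted curve has finite length.
   Context: $|\cdot|$ denotes the Euclidean norm on $\mathbb{R}^2$; lengths and diameters are computed with it (all norms on $\mathbb{R}^2$ being equivalent, this only affects the constant). A curve is any map $\gamma:I\to\mathbb{R}^2$ from an interval $I\subset\mathbb{R}$, not necessarily continuous. Its length is $\ell(\gamma)=\sup\sum_{i=0}^{m-1}|\gamma(t_i)-\gamma(t_{i+1})|$, the supremum over all finite increasing sequences $t_0<t_1<\dots<t_m$ in $I$. A curve $\gamma:I\to\mathbb{R}^2$ is $\|\cdot\|$-self-contracted if for every $[a,b]\subset I$ the function $t\mapsto\|\gamma(t)-\gamma(b)\|$ is non-increasing on $[a,b]$. The norm is called $C^2$ if $x\mapsto\|x\|$ is $C^2$ on $\mathbb{R}^2\setminus\{0\}$, and $C^2$ and strictly convex if moreover the unit sphere $\{\|x\|=1\}$ is a $C^2$ curve with strictly positive curvature (equivalently $D^2\|x\|(h,h)>0$ for all $x\neq0$ and all $h$ not parallel to $x$); in particular the unit ball is strictly convex (its boundary contains no nontrivial segment).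 *)

(* Defs.v *)
From Stdlib Require Import Reals Lra List Sorted.
From Coquelicot Require Import Coquelicot.
Open Scope R_scope.

Definition vadd (p q : R * R) : R * R := (fst p + fst q, snd p + snd q).
Definition vsub (p q : R * R) : R * R := (fst p - fst q, snd p - snd q).
Definition vscal (t : R) (p : R * R) : R * R := (t * fst p, t * snd p).

Definition eucl (p : R * R) : R := sqrt (fst p ^ 2 + snd p ^ 2).

Definition is_norm (N : R * R -> R) : Prop :=
  (forall p, N p = 0 <-> p = (0, 0)) /\
  (forall t p, N (vscal t p) = Rabs t * N p) /\
  (forall p q, N (vadd p q) <= N p + N q).

Definition d1 (f : R * R -> R) (p : R * R) : R := Derive (fun t => f (t, snd p)) (fst p).
Definition d2 (f : R * R -> R) (p : R * R) : R := Derive (fun t => f (fst p, t)) (snd p).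
Definition ex_d1 (f : R * R -> R) (p : R * R) : Prop := ex_derive (fun t => f (t, snd p)) (fst p).
Definition ex_d2 (f : R * R -> R) (p : R * R) : Prop := ex_derive (fun t => f (fst p, t)) (snd p).

Definition C2_away_from_0 (f : R * R -> R) : Prop :=
  forall p, p <> (0, 0) ->
    ex_d1 f p /\ ex_d2 f p /\
    ex_d1 (d1 f) p /\ ex_d2 (d1 f) p /\ ex_d1 (d2 f) p /\ ex_d2 (d2 f) p /\
    continuous f p /\ continuous (d1 f) p /\ continuous (d2 f) p /\
    continuous (d1 (d1 f)) p /\ continuous (d2 (d1 f)) p /\
    continuous (d1 (d2 f)) p /\ continuous (d2 (d2 f)) p.

Definition D2 (f : R * R -> R) (x h : R * R) : R :=
  fst h ^ 2 * d1 (d1 f) x + fst h * snd h * (d2 (d1 f) x + d1 (d2 f) x)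
  + snd h ^ 2 * d2 (d2 f) x.

Definition parallel (h x : R * R) : Prop := fst h * snd x - snd h * fst x = 0.

Definition C2_strictly_convex_norm (N : R * R -> R) : Prop :=
  is_norm N /\ C2_away_from_0 N /\
  (forall x h, x <> (0, 0) -> ~ parallel h x -> D2 N x h > 0).

Definition is_interval (I : R -> Prop) : Prop :=
  forall a b c, I a -> I b -> a <= c <= b -> I c.

Definition self_contracted (N : R * R -> R) (I : R -> Prop) (gamma : R -> R * R) : Prop :=
  forall a b, a <= b -> (forall c, a <= c <= b -> I c) ->
    forall s t, a <= s -> s <= t -> t <= b ->
      N (vsub (gamma t) (gamma b)) <= N (vsub (gamma s) (gamma b)).

Fixpoint poly_sum (gamma : R -> R * R) (l : list R) : R :=
  match l with
  | t0 :: ((t1 :: _) as l') => eucl (vsub (gamma t0) (gamma t1)) + poly_sum gamma l'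
  | _ => 0
  end.

Definition curve_length (I : R -> Prop) (gamma : R -> R * R) : Rbar :=
  Lub_Rbar (fun s => exists l : list R,
     StronglySorted Rlt l /\ List.Forall (fun t : R => I t) l /\ s = poly_sum gamma l).

Definition convex_set (S : R * R -> Prop) : Prop :=
  forall p q lam, S p -> S q -> 0 <= lam <= 1 ->
    S (vadd (vscal lam p) (vscal (1 - lam) q)).

Definition closed_convex_hull_image (I : R -> Prop) (gamma : R -> R * R) (p : R * R) : Prop :=
  forall S : R * R -> Prop, closed S -> convex_set S ->
    (forall t, I t -> S (gamma t)) -> S p.

(* Euclidean diameter (convention diam(empty) = 0) *)
Definition diam (K : R * R -> Prop) : Rbar :=
  Lub_Rbar (fun d => d = 0 \/ exists p q, K p /\ K q /\ d = eucl (vsub p q)).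

(* Main.v *)
Require Import Defs.
From Stdlib Require Import Reals Lra Psatz List Sorted.
From Coquelicot Require Import Coquelicot.
Open Scope R_scope.

Definition dot (p q : R*R) : R := fst p * fst q + snd p * snd q.
Definition det (p q : R*R) : R := fst p * snd q - snd p * fst q.

Lemma eucl_sq p : eucl p ^ 2 = fst p ^ 2 + snd p ^ 2.
Proof. unfold eucl. rewrite <- Rsqr_pow2, Rsqr_sqrt; [ring|nra]. Qed.

Lemma eucl_ge0 p : 0 <= eucl p.
Proof. unfold eucl; apply sqrt_pos. Qed.

Lemma eucl_fst p : Rabs (fst p) <= eucl p.
Proof.
  apply Rsqr_incr_0_var; [|apply eucl_ge0]. rewrite <- Rsqr_abs.
  unfold Rsqr. pose proof (eucl_sq p). nra.
Qed.

Lemma eucl_snd p : Rabs (snd p) <= eucl p.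
Proof.
  apply Rsqr_incr_0_var; [|apply eucl_ge0]. rewrite <- Rsqr_abs.
  unfold Rsqr. pose proof (eucl_sq p). nra.
Qed.

Lemma eucl_le_l1 p : eucl p <= Rabs (fst p) + Rabs (snd p).
Proof.
  apply Rsqr_incr_0_var; [|pose proof (Rabs_pos (fst p)); pose proof (Rabs_pos (snd p)); lra].
  unfold Rsqr. pose proof (eucl_sq p).
  pose proof (Rabs_pos (fst p)); pose proof (Rabs_pos (snd p)).
  assert (Rabs (fst p) * Rabs (fst p) = fst p ^ 2) by (rewrite <- Rabs_mult; rewrite Rabs_right; nra).
  assert (Rabs (snd p) * Rabs (snd p) = snd p ^ 2) by (rewrite <- Rabs_mult; rewrite Rabs_right; nra).
  nra.
Qed.

Lemma eucl_zero p : eucl p = 0 -> p = (0,0).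
Proof.
  intro H. pose proof (eucl_sq p). rewrite H in H0. destruct p as [a b]; simpl in *.
  assert (a = 0) by nra. assert (b = 0) by nra. subst; auto.
Qed.

Lemma eucl_pos p : p <> (0,0) -> 0 < eucl p.
Proof.
  intro H. destruct (eucl_ge0 p); auto. exfalso; apply H, eucl_zero; auto.
Qed.

Lemma cauchy_schwarz p q : Rabs (dot p q) <= eucl p * eucl q.
Proof.
  apply Rsqr_incr_0_var; [| apply Rmult_le_pos; apply eucl_ge0].
  rewrite <- Rsqr_abs. unfold Rsqr, dot.
  pose proof (eucl_sq p); pose proof (eucl_sq q).
  assert (eucl p * eucl q * (eucl p * eucl q) = eucl p ^ 2 * eucl q ^ 2) by ring.
  rewrite H1, H, H0. pose proof (pow2_ge_0 (fst p * snd q - snd p * fst q)). nra.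
Qed.

Lemma lagrange p q : dot p q ^ 2 + det p q ^ 2 = (eucl p * eucl q) ^ 2.
Proof.
  rewrite Rpow_mult_distr, eucl_sq, eucl_sq. unfold dot, det. ring.
Qed.

Lemma eucl_triangle p q : eucl (vadd p q) <= eucl p + eucl q.
Proof.
  apply Rsqr_incr_0_var; [| pose proof (eucl_ge0 p); pose proof (eucl_ge0 q); lra].
  unfold Rsqr. pose proof (eucl_sq (vadd p q)). pose proof (eucl_sq p). pose proof (eucl_sq q).
  pose proof (cauchy_schwarz p q). pose proof (Rle_abs (dot p q)).
  unfold vadd, dot in *; simpl in *. nra.
Qed.

Lemma eucl_scal t p : eucl (vscal t p) = Rabs t * eucl p.
Proof.
  unfold eucl, vscal; cbn [fst snd].
  replace ((t * fst p) ^ 2 + (t * snd p) ^ 2) with (Rsqr t * (fst p ^ 2 + snd p ^ 2)) by (unfold Rsqr; ring).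
  rewrite sqrt_mult_alt; [|apply Rle_0_sqr]. rewrite sqrt_Rsqr_abs. auto.
Qed.
Section NormFacts.
Variable N : R * R -> R.
Hypothesis HN : is_norm N.

Lemma Rabs_m1 : Rabs (-1) = 1.
Proof. rewrite Rabs_left; lra. Qed.

Lemma N_scal t p : N (vscal t p) = Rabs t * N p.
Proof. destruct HN as [_ [H _]]; auto. Qed.
Lemma N_tri p q : N (vadd p q) <= N p + N q.
Proof. destruct HN as [_ [_ H]]; auto. Qed.
Lemma N_zero p : N p = 0 <-> p = (0,0).
Proof. destruct HN as [H _]; auto. Qed.

Lemma N00 : N (0,0) = 0.
Proof. apply N_zero; auto. Qed.

Lemma N_nonneg p : 0 <= N p.
Proof.
  pose proof (N_tri p (vscal (-1) p)). rewrite N_scal in H.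
  replace (vadd p (vscal (-1) p)) with (0,0) in H.
  2:{ unfold vadd, vscal; destruct p; simpl; f_equal; ring. }
  rewrite N00, Rabs_m1 in H. lra.
Qed.

Lemma N_pos p : p <> (0,0) -> 0 < N p.
Proof.
  intro H. destruct (N_nonneg p); auto. exfalso; apply H, N_zero; auto.
Qed.

Lemma N_eq_vec p q : p = q -> N p = N q.
Proof. intros ->; auto. Qed.

Lemma N_opp p : N (vscal (-1) p) = N p.
Proof. rewrite N_scal, Rabs_m1; ring. Qed.

Lemma N_sym p q : N (vsub p q) = N (vsub q p).
Proof.
  rewrite <- N_opp. apply N_eq_vec. unfold vsub, vscal; simpl; f_equal; ring.
Qed.

Definition Mn := N (1,0) + N (0,1) + 1.

Lemma Mn_pos : 0 < Mn.
Proof. unfold Mn; pose proof (N_nonneg (1,0)); pose proof (N_nonneg (0,1)); lra. Qed.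

Lemma N_upper p : N p <= Mn * eucl p.
Proof.
  replace p with (vadd (vscal (fst p) (1,0)) (vscal (snd p) (0,1)))
    by (unfold vadd, vscal; destruct p; simpl; f_equal; ring).
  eapply Rle_trans; [apply N_tri|]. rewrite !N_scal.
  set (q := vadd (vscal (fst p) (1, 0)) (vscal (snd p) (0, 1))).
  assert (Hq1 : fst q = fst p) by (unfold q, vadd, vscal; simpl; ring).
  assert (Hq2 : snd q = snd p) by (unfold q, vadd, vscal; simpl; ring).
  pose proof (eucl_fst q); pose proof (eucl_snd q). rewrite Hq1 in H; rewrite Hq2 in H0.
  pose proof (N_nonneg (1,0)); pose proof (N_nonneg (0,1)).
  pose proof (Rabs_pos (fst p)); pose proof (Rabs_pos (snd p)). pose proof (eucl_ge0 q).
  unfold Mn. nra.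
Qed.

Lemma N_lip_seg (a b : R*R) s s' :
  Rabs (N (vadd a (vscal s b)) - N (vadd a (vscal s' b))) <= Rabs (s - s') * N b.
Proof.
  assert (E1 : vadd a (vscal s b) = vadd (vadd a (vscal s' b)) (vscal (s - s') b))
    by (unfold vadd, vscal; simpl; f_equal; ring).
  assert (E2 : vadd a (vscal s' b) = vadd (vadd a (vscal s b)) (vscal (s' - s) b))
    by (unfold vadd, vscal; simpl; f_equal; ring).
  pose proof (N_tri (vadd a (vscal s' b)) (vscal (s - s') b)).
  pose proof (N_tri (vadd a (vscal s b)) (vscal (s' - s) b)).
  rewrite <- E1 in H. rewrite <- E2 in H0. rewrite !N_scal in *.
  rewrite Rabs_minus_sym in H0. apply Rabs_le. lra.
Qed.

Lemma seg_cont (a b : R*R) x : continuity_pt (fun s => N (vadd a (vscal s b))) x.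
Proof.
  unfold continuity_pt, continue_in, limit1_in, limit_in. intros eps Heps.
  exists (eps / (N b + 1)). split.
  { apply Rdiv_lt_0_compat; auto. pose proof (N_nonneg b); lra. }
  intros y [_ Hy]. simpl in *. unfold R_dist in *.
  eapply Rle_lt_trans; [apply N_lip_seg|].
  pose proof (N_nonneg b). pose proof (Rabs_pos (y - x)).
  assert (Rabs (y - x) * (N b + 1) < eps).
  { apply (Rmult_lt_compat_r (N b + 1)) in Hy; [|lra].
    unfold Rdiv in Hy. rewrite Rmult_assoc, Rinv_l in Hy; lra. }
  nra.
Qed.

Lemma seg_min (a b : R*R) : (forall s, 0 <= s <= 1 -> vadd a (vscal s b) <> (0,0)) ->
  exists m, 0 < m /\ forall s, 0 <= s <= 1 -> m <= N (vadd a (vscal s b)).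
Proof.
  intro Hnz.
  destruct (continuity_ab_min (fun s => N (vadd a (vscal s b))) 0 1) as [mx [H1 H2]]; [lra| intros; apply seg_cont|].
  exists (N (vadd a (vscal mx b))). split; auto. apply N_pos, Hnz; auto.
Qed.

Lemma N_lower : exists m, 0 < m /\ forall p, m * eucl p <= N p.
Proof.
  destruct (seg_min (1,0) (-1,1)) as [m1 [Hm1 H1]].
  { intros s Hs E. unfold vadd, vscal in E; simpl in E. injection E; intros. lra. }
  destruct (seg_min (1,0) (-1,-1)) as [m2 [Hm2 H2]].
  { intros s Hs E. unfold vadd, vscal in E; simpl in E. injection E; intros. lra. }
  exists (Rmin m1 m2). split; [apply Rmin_glb_lt; auto|].
  intros [a b].
  destruct (Req_dec (Rabs a + Rabs b) 0) as [HL|HL].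
  { assert (a = 0) by (pose proof (Rabs_pos a); pose proof (Rabs_pos b);
      apply Rabs_eq_0; lra).
    assert (b = 0) by (pose proof (Rabs_pos a); pose proof (Rabs_pos b);
      apply Rabs_eq_0; lra). subst. rewrite N00.
    assert (E0 : eucl (0,0) = 0) by (unfold eucl; cbn [fst snd]; replace (0^2+0^2) with 0 by ring; apply sqrt_0).
    rewrite E0; lra. }
  set (L := Rabs a + Rabs b).
  assert (HLp : 0 < L) by (unfold L; pose proof (Rabs_pos a); pose proof (Rabs_pos b); lra).
  pose proof (eucl_le_l1 (a,b)). simpl in H.
  assert (Hs : 0 <= Rabs b / L <= 1).
  { split. apply Rdiv_le_0_compat; [apply Rabs_pos|lra].
    apply Rmult_le_reg_r with L; auto. unfold Rdiv; rewrite Rmult_assoc, Rinv_l by lra.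
    unfold L; pose proof (Rabs_pos a); lra. }
  assert (Key : Rmin m1 m2 <= N (vscal (/L) (a,b))).
  { destruct (Rle_dec 0 a) as [Ha|Ha]; destruct (Rle_dec 0 b) as [Hb|Hb].
    - eapply Rle_trans; [apply Rmin_l|]. specialize (H1 _ Hs).
      replace (vscal (/L) (a,b)) with (vadd (1,0) (vscal (Rabs b / L) (-1,1))); auto.
      unfold vadd, vscal; simpl. unfold L in HLp |- *. rewrite (Rabs_right a), (Rabs_right b) in * by lra.
      f_equal; field; lra.
    - eapply Rle_trans; [apply Rmin_r|]. specialize (H2 _ Hs).
      replace (vscal (/L) (a,b)) with (vadd (1,0) (vscal (Rabs b / L) (-1,-1))); auto.
      unfold vadd, vscal; simpl. unfold L in HLp |- *. rewrite (Rabs_right a), (Rabs_left b) in * by lra.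
      f_equal; field; lra.
    - eapply Rle_trans; [apply Rmin_r|]. specialize (H2 _ Hs).
      rewrite <- N_opp.
      replace (vscal (-1) (vscal (/L) (a,b))) with (vadd (1,0) (vscal (Rabs b / L) (-1,-1))); auto.
      unfold vadd, vscal; simpl. unfold L in HLp |- *. rewrite (Rabs_left a), (Rabs_right b) in * by lra.
      f_equal; field; lra.
    - eapply Rle_trans; [apply Rmin_l|]. specialize (H1 _ Hs).
      rewrite <- N_opp.
      replace (vscal (-1) (vscal (/L) (a,b))) with (vadd (1,0) (vscal (Rabs b / L) (-1,1))); auto.
      unfold vadd, vscal; simpl. unfold L in HLp |- *. rewrite (Rabs_left a), (Rabs_left b) in * by lra.
      f_equal; field; lra. }
  rewrite N_scal, Rabs_right in Key by (apply Rle_ge, Rlt_le, Rinv_0_lt_compat; auto).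
  assert (Rmin m1 m2 * L <= N (a,b)).
  { apply (Rmult_le_compat_r L) in Key; [|lra].
    replace (/ L * N (a, b) * L) with (N (a,b)) in Key by (field; lra). auto. }
  assert (0 < Rmin m1 m2) by (apply Rmin_glb_lt; auto).
  fold L in H. nra.
Qed.

End NormFacts.
Definition perp (p : R*R) : R*R := (- snd p, fst p).

Lemma eucl_perp p : eucl (perp p) = eucl p.
Proof. unfold eucl, perp; simpl. f_equal. ring. Qed.

Lemma pq_alg (P a b m M : R) : 0 < m -> 0 < M -> 0 <= P -> a ^ 2 + b ^ 2 = P ^ 2 ->
  (a < 0 -> m * (- a) <= M * Rabs b) ->
  P + a >= m ^ 2 / (2 * (M ^ 2 + m ^ 2)) * P.
Proof.
  intros Hm HM HP HL Hab.
  assert (Hk : 0 < 2 * (M ^ 2 + m ^ 2)) by nra.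
  assert (Hk1 : m ^ 2 / (2 * (M ^ 2 + m ^ 2)) <= 1/2).
  { apply Rmult_le_reg_r with (2 * (M ^ 2 + m ^ 2)); auto. unfold Rdiv.
    rewrite Rmult_assoc, Rinv_l by lra. nra. }
  assert (Hk0 : 0 <= m ^ 2 / (2 * (M ^ 2 + m ^ 2))) by (apply Rdiv_le_0_compat; nra).
  assert (HaP : Rabs a <= P).
  { apply Rsqr_incr_0_var; auto. rewrite <- Rsqr_abs. unfold Rsqr. nra. }
  destruct (Rle_dec 0 a) as [Ha|Ha].
  - nra.
  - specialize (Hab ltac:(lra)).
    rewrite Rabs_left in HaP by lra.
    assert (Hb2 : m ^ 2 * a ^ 2 <= M ^ 2 * b ^ 2).
    { assert (0 <= m * - a) by nra.
      assert ((m * - a) ^ 2 <= (M * Rabs b) ^ 2) by (apply pow_incr; lra).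
      replace (b ^ 2) with (Rabs b ^ 2) by (rewrite <- Rsqr_pow2, <- Rsqr_pow2, <- Rsqr_abs; auto).
      nra. }
    assert (Hb3 : m ^ 2 * P ^ 2 <= (M ^ 2 + m ^ 2) * b ^ 2) by nra.
    destruct (Req_dec P 0) as [HP0|HP0]. { subst; nra. }
    assert (Hmain : (P + a) * (2 * P) >= b ^ 2) by nra.
    set (k := m ^ 2 / (2 * (M ^ 2 + m ^ 2))).
    assert (Hkk : k * (2 * (M ^ 2 + m ^ 2)) = m ^ 2) by (unfold k; field; nra).
    assert (k * P * (2 * P) * (M^2+m^2) <= (P + a) * (2 * P) * (M^2+m^2)).
    { replace (k * P * (2 * P) * (M^2+m^2)) with (k * (2 * (M ^ 2 + m ^ 2)) * P * P) by ring.
      rewrite Hkk. nra. }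
    assert (0 < P) by lra.
    assert (0 < 2 * P * (M^2+m^2)) by nra.
    apply Rle_ge. apply Rmult_le_reg_r with (2 * P * (M^2+m^2)); auto. nra.
Qed.

Section PQ.
Variable N : R * R -> R.
Hypothesis HN : is_norm N.
Variable m : R.
Hypothesis Hm : 0 < m.
Hypothesis Hlow : forall p, m * eucl p <= N p.

Definition eps0 := m ^ 2 / (2 * (Mn N ^ 2 + m ^ 2)).

Lemma eps0_pos : 0 < eps0.
Proof. unfold eps0. pose proof (Mn_pos N HN). apply Rdiv_lt_0_compat; nra. Qed.
Lemma eps0_le : eps0 <= 1/2.
Proof.
  unfold eps0. pose proof (Mn_pos N HN).
  apply Rmult_le_reg_r with (2 * (Mn N ^ 2 + m ^ 2)); [nra|]. unfold Rdiv.
  rewrite Rmult_assoc, Rinv_l by nra. nra.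
Qed.

Lemma PQ y z : N (vsub y z) <= N y ->
  eucl y * eucl z + dot y z >= eps0 * (eucl y * eucl z).
Proof.
  intro H. unfold eps0. pose proof (Mn_pos N HN) as HM.
  apply (pq_alg _ _ (det y z)); auto.
  - apply Rmult_le_pos; apply eucl_ge0.
  - rewrite <- lagrange. fold (det y z). ring.
  - intro Ha.
    set (Y := eucl y ^ 2).
    assert (HY : Y = fst y ^ 2 + snd y ^ 2) by apply eucl_sq.
    assert (E : vscal (Y - dot y z) y = vadd (vscal Y (vsub y z)) (vscal (det y z) (perp y))).
    { unfold vscal, vadd, vsub, perp, dot, det; rewrite HY; simpl; f_equal; ring. }
    pose proof (N_tri N HN (vscal Y (vsub y z)) (vscal (det y z) (perp y))).
    rewrite <- E, !(N_scal N HN) in H0.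
    pose proof (N_upper N HN (perp y)). rewrite eucl_perp in H1.
    assert (HY0 : 0 <= Y) by (unfold Y; apply pow2_ge_0).
    rewrite (Rabs_right Y) in H0 by lra.
    rewrite (Rabs_right (Y - dot y z)) in H0 by lra.
    pose proof (Hlow y). pose proof (eucl_ge0 y). pose proof (Rabs_pos (det y z)).
    pose proof (N_nonneg N HN y).
    assert (H5x : - dot y z * N y <= Rabs (det y z) * (Mn N * eucl y)).
    { assert (Y * N (vsub y z) <= Y * N y) by (apply Rmult_le_compat_l; auto).
      assert (Rabs (det y z) * N (perp y) <= Rabs (det y z) * (Mn N * eucl y)) by (apply Rmult_le_compat_l; auto).
      nra. }
    destruct (Req_dec (eucl y) 0) as [Hy0|Hy0].
    +
      apply eucl_zero in Hy0. subst y. unfold dot in Ha. simpl in Ha. lra.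
    + assert (0 < eucl y) by lra.
      assert (m * - dot y z * eucl y <= Mn N * Rabs (det y z) * eucl y).
      { assert (m * eucl y * - dot y z <= N y * - dot y z) by (apply Rmult_le_compat_r; lra). nra. }
      apply Rmult_le_reg_r with (eucl y); auto.
Qed.
End PQ.
Lemma argmax_range (f : nat -> R) lo n :
  exists k, (lo <= k <= lo + n)%nat /\ forall j, (lo <= j <= lo + n)%nat -> f j <= f k.
Proof.
  induction n as [|n IH].
  - exists lo. split; [lia|]. intros j Hj. replace j with lo by lia. lra.
  - destruct IH as [k [Hk Hmax]].
    destruct (Rle_dec (f (lo + S n)%nat) (f k)).
    + exists k. split; [lia|]. intros j Hj.
      destruct (Nat.eq_dec j (lo + S n)) as [->|]; auto. apply Hmax; lia.
    + exists (lo + S n)%nat. split; [lia|]. intros j Hj.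
      destruct (Nat.eq_dec j (lo + S n)) as [->|]; [lra|]. specialize (Hmax j ltac:(lia)). lra.
Qed.

Lemma argmin_range (f : nat -> R) lo n :
  exists k, (lo <= k <= lo + n)%nat /\ forall j, (lo <= j <= lo + n)%nat -> f k <= f j.
Proof.
  destruct (argmax_range (fun j => - f j) lo n) as [k [Hk H]]. exists k; split; auto.
  intros j Hj; specialize (H j Hj); lra.
Qed.

Lemma frame_dot c z z' : eucl c ^ 2 * dot z z' = dot c z * dot c z' + det c z * det c z'.
Proof. rewrite eucl_sq; unfold dot, det; ring. Qed.
Lemma frame_det c z z' : eucl c ^ 2 * det z z' = dot c z * det c z' - det c z * dot c z'.
Proof. rewrite eucl_sq; unfold dot, det; ring. Qed.

Lemma param_id (rho A S t : R) : 0 <= rho -> 0 < rho + A -> A ^ 2 + S ^ 2 = rho ^ 2 -> t = S / (rho + A) ->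
  A = rho * (1 - t ^ 2) / (1 + t ^ 2) /\ S = 2 * rho * t / (1 + t ^ 2).
Proof.
  intros Hr Hp HL Ht.
  assert (Hr' : 0 < rho) by nra.
  assert (Ht2 : t ^ 2 = (rho - A) / (rho + A)).
  { rewrite Ht. unfold Rdiv. rewrite Rpow_mult_distr. replace (S ^ 2) with (rho ^ 2 - A ^ 2) by lra.
    rewrite pow_inv. field. lra. }
  assert (Hpos : 0 < 1 + t ^ 2) by nra.
  split.
  - rewrite Ht2. field. split; lra.
  - rewrite Ht2. rewrite Ht at 1. field. split; lra.
Qed.

Lemma poly_key t p q : q <= t <= p -> 0 < 1 + p * q ->
  2 * (1 + t * p) ^ 2 * (1 + q ^ 2) + 2 * (1 + t * q) ^ 2 * (1 + p ^ 2)
  - 2 * (1 + t ^ 2) * (1 + p ^ 2) * (1 + q ^ 2) - 2 * (1 + p * q) ^ 2 * (1 + t ^ 2) >= 0.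
Proof.
  intros Ht Hpq.
  replace (2 * (1 + t * p) ^ 2 * (1 + q ^ 2) + 2 * (1 + t * q) ^ 2 * (1 + p ^ 2)
  - 2 * (1 + t ^ 2) * (1 + p ^ 2) * (1 + q ^ 2) - 2 * (1 + p * q) ^ 2 * (1 + t ^ 2))
  with (4 * ((p - t) * (t - q)) * (1 + p * q)) by ring.
  assert (0 <= (p - t) * (t - q)) by nra. nra.
Qed.
Lemma alg_final t p q eps : q <= t <= p -> 0 < 1 + p * q ->
  2 * (1 + p * q) ^ 2 >= eps * ((1 + p ^ 2) * (1 + q ^ 2)) ->
  (1 - t ^ 2) * ((1 - p ^ 2) / (1 + p ^ 2) + (1 - q ^ 2) / (1 + q ^ 2))
  + 2 * t * (2 * p / (1 + p ^ 2) + 2 * q / (1 + q ^ 2)) >= eps * (1 + t ^ 2).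
Proof.
  intros Ht Hpq Heps.
  pose proof (poly_key t p q Ht Hpq) as K.
  assert (Dp : 0 < 1 + p ^ 2) by nra. assert (Dq : 0 < 1 + q ^ 2) by nra.
  assert (Dt : 0 < 1 + t ^ 2) by nra.
  apply Rle_ge. apply Rmult_le_reg_r with ((1 + p ^ 2) * (1 + q ^ 2)); [nra|].
  replace (((1 - t ^ 2) * ((1 - p ^ 2) / (1 + p ^ 2) + (1 - q ^ 2) / (1 + q ^ 2))
  + 2 * t * (2 * p / (1 + p ^ 2) + 2 * q / (1 + q ^ 2))) * ((1 + p ^ 2) * (1 + q ^ 2)))
  with (2 * (1 + t * p) ^ 2 * (1 + q ^ 2) + 2 * (1 + t * q) ^ 2 * (1 + p ^ 2)
  - 2 * (1 + t ^ 2) * (1 + p ^ 2) * (1 + q ^ 2)) by (field; lra).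
  assert (eps * (1 + t ^ 2) * ((1 + p ^ 2) * (1 + q ^ 2)) <= 2 * (1 + p * q) ^ 2 * (1 + t ^ 2)) by nra.
  lra.
Qed.

Lemma alg_u p q :
  ((1 - p ^ 2) / (1 + p ^ 2) + (1 - q ^ 2) / (1 + q ^ 2)) ^ 2
  + (2 * p / (1 + p ^ 2) + 2 * q / (1 + q ^ 2)) ^ 2 <= 4.
Proof.
  assert (Dp : 0 < 1 + p ^ 2) by nra. assert (Dq : 0 < 1 + q ^ 2) by nra.
  replace (((1 - p ^ 2) / (1 + p ^ 2) + (1 - q ^ 2) / (1 + q ^ 2)) ^ 2
  + (2 * p / (1 + p ^ 2) + 2 * q / (1 + q ^ 2)) ^ 2)
  with (2 + 2 * (((1 - p ^ 2) * (1 - q ^ 2) + 4 * p * q) / ((1 + p ^ 2) * (1 + q ^ 2))))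
  by (field; lra).
  assert (((1 - p ^ 2) * (1 - q ^ 2) + 4 * p * q) / ((1 + p ^ 2) * (1 + q ^ 2)) <= 1).
  { apply Rmult_le_reg_r with ((1 + p ^ 2) * (1 + q ^ 2)); [nra|].
    unfold Rdiv. rewrite Rmult_assoc, Rinv_l by nra. pose proof (pow2_ge_0 (p - q)). nra. }
  lra.
Qed.

Lemma perp_decomp c w : 0 < eucl c ^ 2 -> det c w = 0 -> w = vscal (dot c w / eucl c ^ 2) c.
Proof.
  rewrite eucl_sq. destruct c as [a b], w as [x y]. unfold det, dot, vscal; cbn [fst snd]. intros Hc Hd.
  f_equal.
  - apply Rmult_eq_reg_r with (a ^ 2 + b ^ 2); [|lra].
    replace ((a * x + b * y) / (a ^ 2 + b ^ 2) * a * (a ^ 2 + b ^ 2)) with ((a * x + b * y) * a) by (field; lra).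
    assert (E : a * y = b * x) by lra. replace ((a*x+b*y)*a) with (a*a*x + b*(a*y)) by ring. rewrite E. ring.
  - apply Rmult_eq_reg_r with (a ^ 2 + b ^ 2); [|lra].
    replace ((a * x + b * y) / (a ^ 2 + b ^ 2) * b * (a ^ 2 + b ^ 2)) with ((a * x + b * y) * b) by (field; lra).
    assert (E : a * y = b * x) by lra. replace ((a*x+b*y)*b) with (a*(b*x) + b*b*y) by ring. rewrite <- E. ring.
Qed.

Section GL.
Variable N : R * R -> R.
Hypothesis HN : is_norm N.
Variable eps : R.
Hypothesis Heps : 0 < eps.
Variable z : nat -> R * R.
Variables lo n : nat.
Hypothesis H1 : forall k, (lo <= k <= lo + n)%nat -> N (vsub (z (lo + n)) (z k)) <= N (z (lo + n)).
Hypothesis H2 : forall k l, (lo <= k <= lo + n)%nat -> (lo <= l <= lo + n)%nat ->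
  eucl (z k) * eucl (z l) + dot (z k) (z l) >= eps * (eucl (z k) * eucl (z l)).

Let c := z (lo + n).

Lemma F2 k l : (lo <= k <= lo + n)%nat -> (lo <= l <= lo + n)%nat ->
  det c (z k) > 0 -> det c (z l) < 0 -> det (z k) (z l) <= 0.
Proof.
  intros Hk Hl HS1 HS2.
  destruct (Rle_dec (det (z k) (z l)) 0) as [|Hd]; auto. exfalso.
  set (S1 := det c (z k)) in *. set (S2 := det c (z l)) in *.
  set (A1 := dot c (z k)). set (A2 := dot c (z l)).
  set (th1 := - S2 / (S1 - S2)). set (th2 := S1 / (S1 - S2)).
  assert (Hth1 : 0 < th1) by (unfold th1; apply Rdiv_lt_0_compat; lra).
  assert (Hth2 : 0 < th2) by (unfold th2; apply Rdiv_lt_0_compat; lra).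
  set (w := vadd (vscal th1 (z k)) (vscal th2 (z l))).
  assert (Ew : vsub c w = vadd (vscal th1 (vsub c (z k))) (vscal th2 (vsub c (z l)))).
  { unfold w, th1, th2, vsub, vadd, vscal. simpl. f_equal; field; lra. }
  assert (HN1 : N (vsub c w) <= N c).
  { rewrite Ew. eapply Rle_trans; [apply (N_tri N HN)|]. rewrite !(N_scal N HN).
    rewrite !Rabs_right by lra. pose proof (H1 k Hk) as H1k. pose proof (H1 l Hl) as H1'.
    fold c in H1k, H1'.
    assert (th1 + th2 = 1) by (unfold th1, th2; field; lra). nra. }
  assert (Hc : c <> (0,0)).
  { intro E. unfold S1 in HS1. rewrite E in HS1. unfold det in HS1; simpl in HS1. lra. }
  assert (Hc2 : 0 < eucl c ^ 2) by (pose proof (eucl_pos c Hc); nra).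
  assert (Hdw1 : det c w = th1 * S1 + th2 * S2)
    by (unfold w, S1, S2, det, vadd, vscal; simpl; ring).
  assert (Hdw : det c w = 0) by (rewrite Hdw1; unfold th1, th2; field; lra).
  assert (Haw1 : dot c w = th1 * A1 + th2 * A2)
    by (unfold w, A1, A2, dot, vadd, vscal; simpl; ring).
  assert (Haw : dot c w < 0).
  { pose proof (frame_det c (z k) (z l)) as Hfd. fold A1 A2 S1 S2 in Hfd.
    assert (E2 : dot c w = (S1 * A2 - S2 * A1) / (S1 - S2)) by (rewrite Haw1; unfold th1, th2; field; lra).
    rewrite E2. apply Rdiv_neg_pos; [|lra]. assert (0 < eucl c ^ 2 * det (z k) (z l)) by nra. lra. }
  set (lam := dot c w / eucl c ^ 2).
  assert (Hlam : lam < 0) by (unfold lam; apply Rdiv_neg_pos; auto).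
  assert (Ecw : vsub c w = vscal (1 - lam) c).
  { assert (Hw := perp_decomp c w Hc2 Hdw). fold lam in Hw. rewrite Hw at 1.
    unfold vsub, vscal; simpl. f_equal; ring. }
  rewrite Ecw, (N_scal N HN), Rabs_right in HN1 by lra.
  pose proof (N_pos N HN c Hc). nra.
Qed.
End GL.
Lemma dot_u zz cc al be : eucl cc <> 0 ->
  dot zz (vscal (/ eucl cc) (vadd (vscal al cc) (vscal be (perp cc)))) = (al * dot cc zz + be * det cc zz) / eucl cc.
Proof. intros H. unfold dot, det, vscal, vadd, perp; simpl. field. auto. Qed.

Lemma eucl_u cc al be : eucl cc <> 0 ->
  eucl (vscal (/ eucl cc) (vadd (vscal al cc) (vscal be (perp cc)))) ^ 2 = al ^ 2 + be ^ 2.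
Proof.
  intros H. rewrite eucl_sq. assert (E := eucl_sq cc).
  unfold vscal, vadd, perp; cbn [fst snd].
  replace ((/ eucl cc * (al * fst cc + be * - snd cc)) ^ 2 + (/ eucl cc * (al * snd cc + be * fst cc)) ^ 2)
    with ((al ^ 2 + be ^ 2) * (fst cc ^ 2 + snd cc ^ 2) / eucl cc ^ 2) by (field; auto).
  rewrite <- E. field. auto.
Qed.

Lemma tt_zero_of_zero (cc zz : R*R) : zz = (0,0) -> det cc zz / (eucl cc * eucl zz + dot cc zz) = 0.
Proof. intros ->. unfold det; simpl. unfold Rdiv. ring. Qed.
Lemma T1_alg rk rl Ak Al Sk Sl a b eps :
  0 < rk -> 0 < rl ->
  Ak = rk * (1 - a ^ 2) / (1 + a ^ 2) -> Sk = 2 * rk * a / (1 + a ^ 2) ->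
  Al = rl * (1 - b ^ 2) / (1 + b ^ 2) -> Sl = 2 * rl * b / (1 + b ^ 2) ->
  rk * rl + (Ak * Al + Sk * Sl) >= eps * (rk * rl) ->
  2 * (1 + a * b) ^ 2 >= eps * ((1 + a ^ 2) * (1 + b ^ 2)).
Proof.
  intros Hk Hl -> -> -> -> H.
  assert (Da : 0 < 1 + a ^ 2) by nra. assert (Db : 0 < 1 + b ^ 2) by nra.
  replace (rk * rl + (rk * (1 - a ^ 2) / (1 + a ^ 2) * (rl * (1 - b ^ 2) / (1 + b ^ 2)) +
      2 * rk * a / (1 + a ^ 2) * (2 * rl * b / (1 + b ^ 2))))
    with ((rk * rl) * (2 * (1 + a * b) ^ 2 / ((1 + a ^ 2) * (1 + b ^ 2)))) in H by (field; lra).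
  assert (Hr : 0 < rk * rl) by nra.
  assert (2 * (1 + a * b) ^ 2 / ((1 + a ^ 2) * (1 + b ^ 2)) >= eps).
  { apply Rle_ge. apply Rmult_le_reg_l with (rk * rl); auto. lra. }
  apply Rle_ge. apply Rmult_le_reg_r with (/ ((1 + a ^ 2) * (1 + b ^ 2))).
  { apply Rinv_0_lt_compat; nra. }
  rewrite Rmult_assoc, Rinv_r by nra. unfold Rdiv in H0. lra.
Qed.

Lemma T2_alg rk rl Ak Al Sk Sl a b :
  0 < rk -> 0 < rl ->
  Ak = rk * (1 - a ^ 2) / (1 + a ^ 2) -> Sk = 2 * rk * a / (1 + a ^ 2) ->
  Al = rl * (1 - b ^ 2) / (1 + b ^ 2) -> Sl = 2 * rl * b / (1 + b ^ 2) ->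
  Ak * Sl - Sk * Al <= 0 -> b < a -> 0 <= 1 + a * b.
Proof.
  intros Hk Hl -> -> -> -> H Hab.
  assert (Da : 0 < 1 + a ^ 2) by nra. assert (Db : 0 < 1 + b ^ 2) by nra.
  replace (rk * (1 - a ^ 2) / (1 + a ^ 2) * (2 * rl * b / (1 + b ^ 2)) -
      2 * rk * a / (1 + a ^ 2) * (rl * (1 - b ^ 2) / (1 + b ^ 2)))
    with ((2 * rk * rl / ((1 + a ^ 2) * (1 + b ^ 2))) * ((b - a) * (1 + a * b))) in H by (field; lra).
  assert (0 < 2 * rk * rl / ((1 + a ^ 2) * (1 + b ^ 2))) by (apply Rdiv_lt_0_compat; nra).
  destruct (Rle_dec 0 (1 + a * b)); auto.
  assert (0 < (b - a) * (1 + a * b)) by (replace ((b - a) * (1 + a * b)) with ((a - b) * (-(1 + a * b))) by ring; apply Rmult_lt_0_compat; lra).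
  assert (0 < 2 * rk * rl / ((1 + a ^ 2) * (1 + b ^ 2)) * ((b - a) * (1 + a * b))) by (apply Rmult_lt_0_compat; auto).
  lra.
Qed.

Section GL2.
Variable N : R * R -> R.
Hypothesis HN : is_norm N.
Variable eps : R.
Hypothesis Heps : 0 < eps.
Variable z : nat -> R * R.
Variables lo n : nat.
Hypothesis H1 : forall k, (lo <= k <= lo + n)%nat -> N (vsub (z (lo + n)) (z k)) <= N (z (lo + n)).
Hypothesis H2 : forall k l, (lo <= k <= lo + n)%nat -> (lo <= l <= lo + n)%nat ->
  eucl (z k) * eucl (z l) + dot (z k) (z l) >= eps * (eucl (z k) * eucl (z l)).

Let c := z (lo + n).
Let tt k := det c (z k) / (eucl c * eucl (z k) + dot c (z k)).

Lemma dot_sym p q : dot p q = dot q p.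
Proof. unfold dot; ring. Qed.

Lemma rhoA_pos k : (lo <= k <= lo + n)%nat -> c <> (0,0) -> z k <> (0,0) ->
  0 < eucl c * eucl (z k) + dot c (z k).
Proof.
  intros Hk Hc Hz. assert (Hh : (lo <= lo + n <= lo + n)%nat) by lia.
  pose proof (H2 k (lo + n) Hk Hh). fold c in H. rewrite dot_sym.
  pose proof (eucl_pos _ Hc). pose proof (eucl_pos _ Hz).
  assert (0 < eucl (z k) * eucl c) by (apply Rmult_lt_0_compat; auto).
  assert (0 < eps * (eucl (z k) * eucl c)) by (apply Rmult_lt_0_compat; auto).
  rewrite Rmult_comm. lra.
Qed.

Lemma tt_param k : (lo <= k <= lo + n)%nat -> c <> (0,0) -> z k <> (0,0) ->
  dot c (z k) = (eucl c * eucl (z k)) * (1 - tt k ^ 2) / (1 + tt k ^ 2) /\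
  det c (z k) = 2 * (eucl c * eucl (z k)) * tt k / (1 + tt k ^ 2).
Proof.
  intros Hk Hc Hz. apply param_id; auto.
  - apply Rmult_le_pos; apply eucl_ge0.
  - apply rhoA_pos; auto.
  - apply lagrange.
Qed.

Lemma T1 k l : (lo <= k <= lo + n)%nat -> (lo <= l <= lo + n)%nat -> c <> (0,0) ->
  z k <> (0,0) -> z l <> (0,0) ->
  2 * (1 + tt k * tt l) ^ 2 >= eps * ((1 + tt k ^ 2) * (1 + tt l ^ 2)).
Proof.
  intros Hk Hl Hc Hzk Hzl.
  destruct (tt_param k Hk Hc Hzk) as [Ek Fk]. destruct (tt_param l Hl Hc Hzl) as [El Fl].
  pose proof (eucl_pos _ Hc). pose proof (eucl_pos _ Hzk). pose proof (eucl_pos _ Hzl).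
  eapply T1_alg; [| | exact Ek | exact Fk | exact El | exact Fl|]; try nra.
  pose proof (H2 k l Hk Hl) as Hkl. pose proof (frame_dot c (z k) (z l)) as Hf.
  assert (Hc2 : 0 < eucl c ^ 2) by nra.
  replace (eucl c * eucl (z k) * (eucl c * eucl (z l))) with (eucl c ^ 2 * (eucl (z k) * eucl (z l))) by ring.
  rewrite <- Hf.
  assert (eucl c ^ 2 * (eps * (eucl (z k) * eucl (z l))) <= eucl c ^ 2 * (eucl (z k) * eucl (z l) + dot (z k) (z l))).
  { apply Rmult_le_compat_l; lra. }
  lra.
Qed.

Lemma S_pos_of_tt k : (lo <= k <= lo + n)%nat -> c <> (0,0) -> z k <> (0,0) ->
  det c (z k) = tt k * (eucl c * eucl (z k) + dot c (z k)).
Proof.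
  intros Hk Hc Hz. pose proof (rhoA_pos k Hk Hc Hz). unfold tt. field. lra.
Qed.

Lemma T2 k l : (lo <= k <= lo + n)%nat -> (lo <= l <= lo + n)%nat -> c <> (0,0) ->
  z k <> (0,0) -> z l <> (0,0) -> tt k > 0 -> tt l < 0 -> 0 <= 1 + tt k * tt l.
Proof.
  intros Hk Hl Hc Hzk Hzl Htk Htl.
  destruct (tt_param k Hk Hc Hzk) as [Ek Fk]. destruct (tt_param l Hl Hc Hzl) as [El Fl].
  pose proof (eucl_pos _ Hc). pose proof (eucl_pos _ Hzk). pose proof (eucl_pos _ Hzl).
  eapply T2_alg; [| | exact Ek | exact Fk | exact El | exact Fl| |lra]; try nra.
  rewrite <- frame_det.
  assert (det (z k) (z l) <= 0).
  { apply (F2 N HN z lo n H1 k l Hk Hl).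
    - fold c. rewrite S_pos_of_tt; auto. pose proof (rhoA_pos k Hk Hc Hzk). nra.
    - fold c. rewrite S_pos_of_tt; auto. pose proof (rhoA_pos l Hl Hc Hzl). nra. }
  nra.
Qed.


Lemma GL_main : exists u, Rabs (fst u) <= 2 /\ Rabs (snd u) <= 2 /\
  forall k, (lo <= k <= lo + n)%nat -> dot (z k) u >= eps * eucl (z k).
Proof.
  assert (Hh : (lo <= lo + n <= lo + n)%nat) by lia.
  destruct (Req_dec (eucl c) 0) as [Hc0|Hc0].
  - apply eucl_zero in Hc0. exists (0,0). split; [simpl; rewrite Rabs_R0; lra|].
    split; [simpl; rewrite Rabs_R0; lra|]. intros k Hk.
    pose proof (H1 k Hk). fold c in H. rewrite Hc0, (N00 N HN) in H.
    assert (N (vsub (0,0) (z k)) = 0) by (pose proof (N_nonneg N HN (vsub (0,0) (z k))); lra).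
    apply (N_zero N HN) in H0. destruct (z k) as [a b]. unfold vsub in H0; simpl in H0.
    injection H0; intros. assert (a = 0) by lra. assert (b = 0) by lra. subst.
    unfold dot; simpl.
    assert (E0 : eucl (0,0) = 0) by (unfold eucl; cbn [fst snd]; replace (0^2+0^2) with 0 by ring; apply sqrt_0).
    rewrite E0. lra.
  - assert (Hc : c <> (0,0)) by (intro E; apply Hc0; rewrite E; unfold eucl; cbn [fst snd];
      replace (0^2+0^2) with 0 by ring; apply sqrt_0).
    assert (Htc : tt (lo + n) = 0).
    { unfold tt. fold c. replace (det c c) with 0 by (unfold det; ring). unfold Rdiv; ring. }
    destruct (argmax_range tt lo n) as [p [Hp Hpmax]].
    destruct (argmin_range tt lo n) as [q [Hq Hqmin]].
    assert (Htp : 0 <= tt p) by (rewrite <- Htc; apply Hpmax; lia).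
    assert (Htq : tt q <= 0) by (rewrite <- Htc; apply Hqmin; lia).
    assert (Rp : exists p', (lo <= p' <= lo + n)%nat /\ z p' <> (0,0) /\ tt p' = tt p).
    { destruct (Req_dec (fst (z p)) 0); destruct (Req_dec (snd (z p)) 0).
      - exists (lo + n)%nat. split; auto. split; [exact Hc|]. rewrite Htc.
        unfold tt. rewrite tt_zero_of_zero; auto. destruct (z p); simpl in *; subst; auto.
      - exists p. split; auto. split; auto. intro E; rewrite E in *; simpl in *; lra.
      - exists p. split; auto. split; auto. intro E; rewrite E in *; simpl in *; lra.
      - exists p. split; auto. split; auto. intro E; rewrite E in *; simpl in *; lra. }
    assert (Rq : exists q', (lo <= q' <= lo + n)%nat /\ z q' <> (0,0) /\ tt q' = tt q).
    { destruct (Req_dec (fst (z q)) 0); destruct (Req_dec (snd (z q)) 0).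
      - exists (lo + n)%nat. split; auto. split; [exact Hc|]. rewrite Htc.
        unfold tt. rewrite tt_zero_of_zero; auto. destruct (z q); simpl in *; subst; auto.
      - exists q. split; auto. split; auto. intro E; rewrite E in *; simpl in *; lra.
      - exists q. split; auto. split; auto. intro E; rewrite E in *; simpl in *; lra.
      - exists q. split; auto. split; auto. intro E; rewrite E in *; simpl in *; lra. }
    destruct Rp as [p' [Hp' [Hzp' Ep']]]. destruct Rq as [q' [Hq' [Hzq' Eq']]].
    pose proof (T1 p' q' Hp' Hq' Hc Hzp' Hzq') as HT1. rewrite Ep', Eq' in HT1.
    set (tp := tt p) in *. set (tq := tt q) in *.
    assert (Hmu : 0 < 1 + tp * tq).
    { destruct (Req_dec tp 0) as [E|E]; [rewrite E; lra|].
      destruct (Req_dec tq 0) as [E'|E']; [rewrite E'; lra|].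
      pose proof (T2 p' q' Hp' Hq' Hc Hzp' Hzq') as HT2. rewrite Ep', Eq' in HT2.
      specialize (HT2 ltac:(fold tp; lra) ltac:(fold tq; lra)).
      destruct HT2 as [|E2]; auto. exfalso. rewrite <- E2 in HT1.
      assert (0 < eps * ((1 + tp ^ 2) * (1 + tq ^ 2))) by (apply Rmult_lt_0_compat; auto; nra).
      simpl in HT1. lra. }
    set (al := (1 - tp ^ 2) / (1 + tp ^ 2) + (1 - tq ^ 2) / (1 + tq ^ 2)).
    set (be := 2 * tp / (1 + tp ^ 2) + 2 * tq / (1 + tq ^ 2)).
    exists (vscal (/ eucl c) (vadd (vscal al c) (vscal be (perp c)))).
    assert (Hu : eucl (vscal (/ eucl c) (vadd (vscal al c) (vscal be (perp c)))) <= 2).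
    { apply Rsqr_incr_0_var; [|lra]. rewrite Rsqr_pow2, eucl_u by auto.
      unfold al, be. pose proof (alg_u tp tq). unfold Rsqr; lra. }
    split; [eapply Rle_trans; [apply eucl_fst|exact Hu]|].
    split; [eapply Rle_trans; [apply eucl_snd|exact Hu]|].
    intros k Hk. rewrite dot_u by auto.
    destruct (Req_dec (eucl (z k)) 0) as [Ez|Ez].
    + pose proof Ez as Ez'. apply eucl_zero in Ez'. rewrite Ez, Ez'. unfold dot, det; simpl. unfold Rdiv. lra.
    + assert (Hzk : z k <> (0,0)) by (intro E; apply Ez; rewrite E; unfold eucl; cbn [fst snd];
        replace (0^2+0^2) with 0 by ring; apply sqrt_0).
      destruct (tt_param k Hk Hc Hzk) as [Ek Fk]. fold c. rewrite Ek, Fk.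
      assert (Htk : tq <= tt k <= tp) by (split; [apply Hqmin|apply Hpmax]; auto).
      pose proof (alg_final (tt k) tp tq eps Htk Hmu HT1) as Hf. fold al be in Hf.
      pose proof (eucl_pos _ Hc). pose proof (eucl_pos _ Hzk).
      assert (Dt : 0 < 1 + tt k ^ 2) by nra.
      replace ((al * (eucl c * eucl (z k) * (1 - tt k ^ 2) / (1 + tt k ^ 2)) +
         be * (2 * (eucl c * eucl (z k)) * tt k / (1 + tt k ^ 2))) / eucl c)
        with (eucl (z k) * (((1 - tt k ^ 2) * al + 2 * tt k * be) / (1 + tt k ^ 2))) by (field; lra).
      assert (((1 - tt k ^ 2) * al + 2 * tt k * be) / (1 + tt k ^ 2) >= eps).
      { apply Rle_ge. apply Rmult_le_reg_r with (1 + tt k ^ 2); auto. unfold Rdiv.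
        rewrite Rmult_assoc, Rinv_l by lra. lra. }
      assert (eucl (z k) * eps <= eucl (z k) * (((1 - tt k ^ 2) * al + 2 * tt k * be) / (1 + tt k ^ 2)))
        by (apply Rmult_le_compat_l; lra).
      lra.
Qed.

End GL2.
Fixpoint ssum (f : nat -> R) (n : nat) : R :=
  match n with 0 => 0 | S n' => ssum f n' + f n' end.

Lemma ssum_le f g n : (forall i, (i < n)%nat -> f i <= g i) -> ssum f n <= ssum g n.
Proof.
  induction n; simpl; intros H; [lra|]. pose proof (H n ltac:(lia)).
  assert (ssum f n <= ssum g n) by (apply IHn; intros; apply H; lia). lra.
Qed.

Lemma ssum_minus f g n : ssum (fun i => f i - g i) n = ssum f n - ssum g n.
Proof. induction n; simpl; [ring|]. rewrite IHn; ring. Qed.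

Lemma ssum_nonneg f n : (forall i, (i < n)%nat -> 0 <= f i) -> 0 <= ssum f n.
Proof.
  induction n; simpl; intros H; [lra|]. pose proof (H n ltac:(lia)).
  assert (0 <= ssum f n) by (apply IHn; intros; apply H; lia). lra.
Qed.

Lemma ssum_ge_term f n i0 : (forall i, (i < n)%nat -> 0 <= f i) -> (i0 < n)%nat -> f i0 <= ssum f n.
Proof.
  induction n; simpl; intros H Hi; [lia|].
  destruct (Nat.eq_dec i0 n) as [->|Hne].
  - pose proof (ssum_nonneg f n ltac:(intros; apply H; lia)). lra.
  - pose proof (H n ltac:(lia)). assert (f i0 <= ssum f n) by (apply IHn; [intros; apply H; lia|lia]). lra.
Qed.

Lemma ssum_const c n : ssum (fun _ => c) n = INR n * c.
Proof. induction n; simpl ssum; [simpl; ring|]. rewrite IHn, S_INR; ring. Qed.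

Lemma ssum_tele (F : nat -> R) n : ssum (fun j => F j - F (S j)) n = F O - F n.
Proof. induction n; simpl; [ring|]. rewrite IHn; ring. Qed.

Lemma ssum_scal c f n : ssum (fun i => c * f i) n = c * ssum f n.
Proof. induction n; simpl; [ring|]. rewrite IHn; ring. Qed.

Lemma grid_approx (d : R) (K : nat) (s : R) : 0 < d -> 0 <= s <= INR K * d ->
  exists a, (a <= K)%nat /\ Rabs (s - INR a * d) <= d.
Proof.
  intros Hd. induction K; intros Hs.
  - exists O. split; [lia|]. simpl in *. replace (s - 0 * d) with s by ring. rewrite Rabs_right; lra.
  - destruct (Rle_dec s (INR K * d)).
    + destruct IHK as [a [Ha Hb]]; [lra|]. exists a; split; [lia|auto].
    + exists (S K). split; [lia|]. rewrite S_INR in *. apply Rabs_le. lra.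
Qed.

Section Potential.
Variable x : nat -> R * R.
Variable n : nat.

Fixpoint hm (w : R * R) (j r : nat) : R :=
  match r with O => dot (x j) w | S r' => Rmax (dot (x j) w) (hm w (S j) r') end.

Lemma hm_ge w r : forall j k, (j <= k <= j + r)%nat -> dot (x k) w <= hm w j r.
Proof.
  induction r; intros j k Hk; simpl.
  - replace k with j by lia. lra.
  - destruct (Nat.eq_dec k j) as [->|]; [apply Rmax_l|].
    eapply Rle_trans; [|apply Rmax_r]. apply IHr; lia.
Qed.

Lemma hm_le w r B : forall j, (forall k, (j <= k <= j + r)%nat -> dot (x k) w <= B) -> hm w j r <= B.
Proof.
  induction r; intros j H; simpl.
  - apply H; lia.
  - apply Rmax_lub; [apply H; lia|]. apply IHr. intros; apply H; lia.
Qed.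

Lemma hm_attained w r : forall j, exists k, (j <= k <= j + r)%nat /\ hm w j r = dot (x k) w.
Proof.
  induction r; intros j; simpl.
  - exists j; split; [lia|auto].
  - destruct (IHr (S j)) as [k [Hk E]]. unfold Rmax. destruct (Rle_dec (dot (x j) w) (hm w (S j) r)).
    + exists k; split; [lia|auto].
    + exists j; split; [lia|auto].
Qed.

Definition hh w j := hm w j (n - j).

Lemma hh_step w j : (j < n)%nat -> hh w j = Rmax (dot (x j) w) (hh w (S j)).
Proof. intros H. unfold hh. replace (n - j)%nat with (S (n - S j)) by lia. reflexivity. Qed.

End Potential.
Lemma eucl_vsub_sym p q : eucl (vsub p q) = eucl (vsub q p).
Proof. unfold eucl, vsub; simpl. f_equal. ring. Qed.

Lemma dot_bound d w : dot d w <= eucl d * (Rabs (fst w) + Rabs (snd w)).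
Proof.
  unfold dot. pose proof (eucl_fst d). pose proof (eucl_snd d).
  pose proof (Rabs_pos (fst w)). pose proof (Rabs_pos (snd w)).
  pose proof (Rle_abs (fst d * fst w)). pose proof (Rle_abs (snd d * snd w)).
  rewrite Rabs_mult in H3, H4.
  assert (Rabs (fst d) * Rabs (fst w) <= eucl d * Rabs (fst w)) by (apply Rmult_le_compat_r; auto).
  assert (Rabs (snd d) * Rabs (snd w) <= eucl d * Rabs (snd w)) by (apply Rmult_le_compat_r; auto).
  lra.
Qed.

Definition len (x : nat -> R * R) (n : nat) := ssum (fun j => eucl (vsub (x j) (x (S j)))) n.

Definition SCd (N : R * R -> R) (x : nat -> R * R) (n : nat) :=
  forall i j k, (i <= j)%nat -> (j <= k)%nat -> (k <= n)%nat ->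
    N (vsub (x j) (x k)) <= N (vsub (x i) (x k)).

Section Discrete.
Variable N : R * R -> R.
Hypothesis HN : is_norm N.
Variable m : R.
Hypothesis Hm : 0 < m.
Hypothesis Hlow : forall p, m * eucl p <= N p.

Let e := eps0 N m.

Lemma step_cone x n j : SCd N x n -> (j < n)%nat ->
  exists u, Rabs (fst u) <= 2 /\ Rabs (snd u) <= 2 /\
  forall k, (S j <= k <= n)%nat -> dot (vsub (x k) (x j)) u >= e * eucl (vsub (x k) (x j)).
Proof.
  intros HSC Hj.
  assert (E : (S j + (n - S j))%nat = n) by lia.
  destruct (GL_main N HN e (eps0_pos N HN m Hm) (fun k => vsub (x k) (x j)) (S j) (n - S j))
    as [u [Hu1 [Hu2 Hu3]]].
  - rewrite E. intros k Hk.
    replace (vsub (vsub (x n) (x j)) (vsub (x k) (x j))) with (vsub (x n) (x k))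
      by (unfold vsub; simpl; f_equal; ring).
    rewrite (N_sym N HN (x n) (x k)), (N_sym N HN (x n) (x j)). apply HSC; lia.
  - rewrite E. intros k l Hk Hl.
    destruct (Nat.le_ge_cases k l) as [Hkl|Hkl].
    + pose proof (PQ N HN m Hm Hlow (vsub (x l) (x j)) (vsub (x k) (x j))) as HP.
      fold e in HP. rewrite (dot_sym (vsub (x k) (x j))), (Rmult_comm (eucl (vsub (x k) (x j)))).
      apply HP.
      replace (vsub (vsub (x l) (x j)) (vsub (x k) (x j))) with (vsub (x l) (x k))
        by (unfold vsub; simpl; f_equal; ring).
      rewrite (N_sym N HN (x l) (x k)), (N_sym N HN (x l) (x j)). apply HSC; lia.
    + pose proof (PQ N HN m Hm Hlow (vsub (x k) (x j)) (vsub (x l) (x j))) as HP.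
      fold e in HP. apply HP.
      replace (vsub (vsub (x k) (x j)) (vsub (x l) (x j))) with (vsub (x k) (x l))
        by (unfold vsub; simpl; f_equal; ring).
      rewrite (N_sym N HN (x k) (x l)), (N_sym N HN (x k) (x j)). apply HSC; lia.
  - exists u. split; auto. split; auto. intros k Hk. apply Hu3. lia.
Qed.

Lemma step_far x n j k : SCd N x n -> (S j <= k <= n)%nat ->
  m * eucl (vsub (x (S j)) (x j)) <= 2 * Mn N * eucl (vsub (x k) (x j)).
Proof.
  intros HSC Hk.
  pose proof (N_tri N HN (vsub (x (S j)) (x k)) (vsub (x k) (x j))).
  replace (vadd (vsub (x (S j)) (x k)) (vsub (x k) (x j))) with (vsub (x (S j)) (x j)) in H
    by (unfold vadd, vsub; simpl; f_equal; ring).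
  assert (N (vsub (x (S j)) (x k)) <= N (vsub (x j) (x k))) by (apply HSC; lia).
  rewrite (N_sym N HN (x j) (x k)) in H0.
  pose proof (Hlow (vsub (x (S j)) (x j))). pose proof (N_upper N HN (vsub (x k) (x j))).
  lra.
Qed.

End Discrete.
Lemma Rabs_le_inv2 a b : Rabs a <= b -> - b <= a <= b.
Proof. unfold Rabs; destruct (Rcase_abs a); intros; lra. Qed.

Section Discrete2.
Variable N : R * R -> R.
Hypothesis HN : is_norm N.
Variable m : R.
Hypothesis Hm : 0 < m.
Hypothesis Hlow : forall p, m * eucl p <= N p.

Lemma discrete_bound : exists C0, 0 < C0 /\ forall x n D, SCd N x n ->
  (forall i k, (i <= n)%nat -> (k <= n)%nat -> eucl (vsub (x i) (x k)) <= D) ->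
  len x n <= C0 * D.
Proof.
  set (e := eps0 N m). assert (He : 0 < e) by (apply eps0_pos; auto).
  pose proof (Mn_pos N HN) as HM.
  set (kap := e / 2 * (m / (2 * Mn N))).
  assert (Hkap : 0 < kap) by (unfold kap; apply Rmult_lt_0_compat; [lra|apply Rdiv_lt_0_compat; lra]).
  destruct (INR_unbounded (16 / e + 1)) as [K HK].
  assert (HK0 : 0 < INR K) by (assert (0 < 16 / e) by (apply Rdiv_lt_0_compat; lra); lra).
  set (del := 4 / INR K).
  assert (Hdel : 0 < del) by (unfold del; apply Rdiv_lt_0_compat; lra).
  assert (Hdel2 : 2 * del <= e / 2).
  { unfold del. assert (16 / e < INR K) by lra.
    apply Rmult_le_reg_r with (INR K * e); [nra|].
    replace (2 * (4 / INR K) * (INR K * e)) with (8 * e) by (field; lra).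
    assert (16 / e * e = 16) by (field; lra). nra. }
  assert (HKd : INR K * del = 4) by (unfold del; field; lra).
  set (G := fun a b : nat => (-2 + INR a * del, -2 + INR b * del)).
  assert (HG : forall a b, (a <= K)%nat -> (b <= K)%nat -> Rabs (fst (G a b)) + Rabs (snd (G a b)) <= 4).
  { intros a b Ha Hb. unfold G; simpl.
    apply le_INR in Ha. apply le_INR in Hb. pose proof (pos_INR a). pose proof (pos_INR b).
    assert (0 <= INR a * del <= 4) by (split; [nra|rewrite <- HKd; apply Rmult_le_compat_r; lra]).
    assert (0 <= INR b * del <= 4) by (split; [nra|rewrite <- HKd; apply Rmult_le_compat_r; lra]).
    assert (Rabs (-2 + INR a * del) <= 2) by (apply Rabs_le; lra).
    assert (Rabs (-2 + INR b * del) <= 2) by (apply Rabs_le; lra). lra. }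
  set (C0 := INR (S K) * (INR (S K) * 4) / kap).
  exists C0. split.
  { unfold C0. apply Rdiv_lt_0_compat; auto. pose proof (lt_0_INR (S K) ltac:(lia)). nra. }
  intros x n D HSC HD.
  set (Phi := fun j => ssum (fun a => ssum (fun b => hh x n (G a b) j) (S K)) (S K)).
  assert (Hmono : forall w j, (j < n)%nat -> hh x n w (S j) <= hh x n w j).
  { intros w j Hj. rewrite (hh_step x n w j Hj). apply Rmax_r. }
  assert (Hstep : forall j, (j < n)%nat -> kap * eucl (vsub (x j) (x (S j))) <= Phi j - Phi (S j)).
  { intros j Hj.
    destruct (step_cone N HN m Hm Hlow x n j HSC Hj) as [u [Hu1 [Hu2 Hu3]]].
    fold e in Hu3.
    destruct (grid_approx del K (- fst u + 2) Hdel) as [a [Ha Ea]]; [rewrite HKd; apply Rabs_le_inv2 in Hu1; lra|].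
    destruct (grid_approx del K (- snd u + 2) Hdel) as [b [Hb Eb]]; [rewrite HKd; apply Rabs_le_inv2 in Hu2; lra|].
    set (w := G a b).
    assert (Hw1 : Rabs (fst w + fst u) <= del).
    { unfold w, G; simpl. replace (-2 + INR a * del + fst u) with (- (- fst u + 2 - INR a * del)) by ring.
      rewrite Rabs_Ropp. auto. }
    assert (Hw2 : Rabs (snd w + snd u) <= del).
    { unfold w, G; simpl. replace (-2 + INR b * del + snd u) with (- (- snd u + 2 - INR b * del)) by ring.
      rewrite Rabs_Ropp. auto. }
    assert (Hdec : hh x n w (S j) <= dot (x j) w - kap * eucl (vsub (x j) (x (S j)))).
    { unfold hh. apply hm_le. intros k Hk.
      specialize (Hu3 k ltac:(lia)).
      set (zk := vsub (x k) (x j)) in *.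
      assert (Ed : dot (x k) w = dot (x j) w - dot zk u + dot zk (vadd w u))
        by (unfold zk, dot, vsub, vadd; simpl; ring).
      pose proof (dot_bound zk (vadd w u)) as Hb1.
      change (fst (vadd w u)) with (fst w + fst u) in Hb1. change (snd (vadd w u)) with (snd w + snd u) in Hb1.
      pose proof (eucl_ge0 zk).
      assert (eucl zk * (Rabs (fst w + fst u) + Rabs (snd w + snd u)) <= eucl zk * (2 * del))
        by (apply Rmult_le_compat_l; lra).
      pose proof (step_far N HN m Hlow x n j k HSC ltac:(lia)) as Hfar. fold zk in Hfar.
      rewrite (eucl_vsub_sym (x j)).
      assert (kap * eucl (vsub (x (S j)) (x j)) <= e / 2 * eucl zk).
      { unfold kap. apply Rmult_le_reg_r with (2 * Mn N); [lra|].
        replace (e / 2 * (m / (2 * Mn N)) * eucl (vsub (x (S j)) (x j)) * (2 * Mn N))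
          with (e / 2 * (m * eucl (vsub (x (S j)) (x j)))) by (field; lra).
        replace (e / 2 * eucl zk * (2 * Mn N)) with (e / 2 * (2 * Mn N * eucl zk)) by ring.
        apply Rmult_le_compat_l; lra. }
      assert (e / 2 * eucl zk <= e * eucl zk - eucl zk * (2 * del)) by nra.
      lra. }
    assert (Hhj : dot (x j) w <= hh x n w j) by (unfold hh; apply hm_ge; lia).
    unfold Phi. rewrite <- ssum_minus.
    eapply Rle_trans; [|apply ssum_ge_term with (i0 := a)].
    - rewrite <- ssum_minus.
      eapply Rle_trans; [|apply ssum_ge_term with (i0 := b)].
      + fold w. lra.
      + intros; pose proof (Hmono (G a i) j Hj); lra.
      + lia.
    - intros i Hi. rewrite <- ssum_minus. apply ssum_nonneg. intros; pose proof (Hmono (G i i0) j Hj); lra.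
    - lia. }
  assert (Hsum : kap * len x n <= Phi O - Phi n).
  { unfold len. rewrite <- ssum_scal, <- ssum_tele. apply ssum_le. intros; apply Hstep; auto. }
  assert (Hend : Phi O - Phi n <= INR (S K) * (INR (S K) * 4) * D).
  { unfold Phi. rewrite <- ssum_minus.
    replace (INR (S K) * (INR (S K) * 4) * D) with (ssum (fun _ => INR (S K) * 4 * D) (S K))
      by (rewrite ssum_const; ring).
    apply ssum_le. intros a Ha. rewrite <- ssum_minus.
    replace (INR (S K) * 4 * D) with (ssum (fun _ => 4 * D) (S K)) by (rewrite ssum_const; ring).
    apply ssum_le. intros b Hb.
    unfold hh. rewrite Nat.sub_0_r, Nat.sub_diag. simpl hm at 2.
    destruct (hm_attained x (G a b) n O) as [k [Hk Ek]]. rewrite Ek.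
    replace (dot (x k) (G a b) - dot (x n) (G a b)) with (dot (vsub (x k) (x n)) (G a b))
      by (unfold dot, vsub; simpl; ring).
    eapply Rle_trans; [apply dot_bound|].
    pose proof (HD k n ltac:(lia) ltac:(lia)). pose proof (HG a b ltac:(lia) ltac:(lia)).
    pose proof (eucl_ge0 (vsub (x k) (x n))).
    pose proof (Rabs_pos (fst (G a b))). pose proof (Rabs_pos (snd (G a b))).
    assert (0 <= D) by lra. nra. }
  unfold C0. apply Rmult_le_reg_l with kap; auto.
  replace (kap * (INR (S K) * (INR (S K) * 4) / kap * D)) with (INR (S K) * (INR (S K) * 4) * D) by (field; lra).
  lra.
Qed.
End Discrete2.
Lemma Rbar_mult_pinf C : 0 < C -> Rbar_mult (Finite C) p_infty = p_infty.
Proof. intros H. unfold Rbar_mult, Rbar_mult'. simpl.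
destruct (Rle_dec 0 C); [|lra]. destruct (Rle_lt_or_eq_dec 0 C r); [auto|lra]. Qed.

Lemma ssum_shift f n : ssum f (S n) = f O + ssum (fun j => f (S j)) n.
Proof. induction n; simpl in *; [ring|]. rewrite IHn; ring. Qed.

Lemma poly_sum_len (g : R -> R * R) l : forall t0,
  poly_sum g (t0 :: l) = len (fun j => g (nth j (t0 :: l) 0)) (length l).
Proof.
  induction l as [|t1 l IH]; intros t0.
  - reflexivity.
  - change (poly_sum g (t0 :: t1 :: l)) with (eucl (vsub (g t0) (g t1)) + poly_sum g (t1 :: l)).
    rewrite IH. unfold len. simpl length. rewrite ssum_shift. reflexivity.
Qed.

Lemma sorted_nth l : StronglySorted Rlt l -> forall i j, (i <= j)%nat -> (j < length l)%nat ->
  nth i l 0 <= nth j l 0.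
Proof.
  induction l as [|a l IH]; intros HS i j Hij Hj; simpl in Hj; [lia|].
  apply StronglySorted_inv in HS as [HS HF].
  destruct i as [|i]; destruct j as [|j]; simpl; try lra; try lia.
  - rewrite List.Forall_forall in HF. apply Rlt_le, HF, nth_In. lia.
  - apply IH; auto; lia.
Qed.

Lemma forall_nth (P : R -> Prop) l i : List.Forall P l -> (i < length l)%nat -> P (nth i l 0).
Proof. intros H Hi. rewrite List.Forall_forall in H. apply H, nth_In; auto. Qed.

Lemma E0eucl : eucl (0,0) = 0.
Proof. unfold eucl; cbn [fst snd]; replace (0^2+0^2) with 0 by ring; apply sqrt_0. Qed.

Theorem theorem1p1 (N : R * R -> R) (HN : C2_strictly_convex_norm N) :
  exists C : R, 0 < C /\
    (forall (I : R -> Prop) (gamma : R -> R * R),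
       is_interval I -> self_contracted N I gamma ->
       Rbar_le (curve_length I gamma)
               (Rbar_mult C (diam (closed_convex_hull_image I gamma)))) /\
    (forall (I : R -> Prop) (gamma : R -> R * R),
       is_interval I -> self_contracted N I gamma ->
       (exists M, forall t, I t -> eucl (gamma t) <= M) ->
       is_finite (curve_length I gamma)).
Proof.
  destruct HN as [HN _].
  destruct (N_lower N HN) as [m [Hm Hlow]].
  destruct (discrete_bound N HN m Hm Hlow) as [C0 [HC0 Hdisc]].
  assert (Part1 : forall (I : R -> Prop) (gamma : R -> R * R),
       is_interval I -> self_contracted N I gamma ->
       Rbar_le (curve_length I gamma)
               (Rbar_mult C0 (diam (closed_convex_hull_image I gamma)))).
  { intros I g HI HSC.
    set (K := closed_convex_hull_image I g).
    assert (Hdl := Lub_Rbar_correct (fun d => d = 0 \/ exists p q, K p /\ K q /\ d = eucl (vsub p q))).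
    fold (diam K) in Hdl. destruct Hdl as [Hub Hleast].
    assert (H0d : Rbar_le 0 (diam K)) by (apply Hub; auto).
    destruct (diam K) as [d| |] eqn:Ed.
    - simpl Rbar_mult.
      assert (Hlub := Lub_Rbar_correct (fun s => exists l : list R,
        StronglySorted Rlt l /\ List.Forall (fun t : R => I t) l /\ s = poly_sum g l)).
      unfold curve_length. apply Hlub.
      intros s [l [Hs [HF ->]]]. simpl.
      simpl in H0d.
      destruct l as [|t0 l]; [simpl; nra|].
      rewrite poly_sum_len.
      set (x := fun j => g (nth j (t0 :: l) 0)).
      apply Hdisc.
      + intros i j k Hij Hjk Hk.
        assert (Hlen : (k < length (t0 :: l))%nat) by (simpl; lia).
        unfold x. apply (HSC (nth i (t0 :: l) 0) (nth k (t0 :: l) 0)).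
        * apply sorted_nth; auto; lia.
        * intros c Hc. apply (HI (nth i (t0 :: l) 0) (nth k (t0 :: l) 0)); auto;
            apply (forall_nth (fun t => I t)); auto; simpl; lia.
        * lra.
        * apply sorted_nth; auto; lia.
        * apply sorted_nth; auto; lia.
      + intros i k Hi Hk.
        assert (Hin : forall j, (j <= length l)%nat -> K (x j)).
        { intros j Hj S HS HC HG. apply HG. apply (forall_nth (fun t => I t)); auto. simpl; lia. }
        specialize (Hub (eucl (vsub (x i) (x k)))). simpl in Hub. apply Hub. right.
        exists (x i), (x k). auto.
    - rewrite Rbar_mult_pinf by auto. destruct (curve_length I g); simpl; auto.
    - simpl in H0d. contradiction. }
  exists C0. split; auto. split; auto.
  intros I g HI HSC [M HM].
  set (K := closed_convex_hull_image I g).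
  set (B := Rmax 0 (4 * M)).
  assert (HKsq : forall p, K p -> (-M <= fst p <= M) /\ (-M <= snd p <= M)).
  { intros p Hp. apply (Hp (fun p => (-M <= fst p <= M) /\ (-M <= snd p <= M))).
    - assert (Cf : forall x : R * R, filterlim fst (locally x) (locally (fst x)))
        by (intros [a b]; apply continuous_fst).
      assert (Cs : forall x : R * R, filterlim snd (locally x) (locally (snd x)))
        by (intros [a b]; apply continuous_snd).
      apply closed_and; apply closed_and.
      + apply (closed_comp fst (fun u => -M <= u)); auto. apply closed_ge.
      + apply (closed_comp fst (fun u => u <= M)); auto. apply closed_le.
      + apply (closed_comp snd (fun u => -M <= u)); auto. apply closed_ge.
      + apply (closed_comp snd (fun u => u <= M)); auto. apply closed_le.
    - intros p1 q1 lam [[A1 A2] [A3 A4]] [[B1 B2] [B3 B4]] Hl. unfold vadd, vscal; simpl.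
      split; split; nra.
    - intros t Ht. pose proof (HM t Ht). pose proof (eucl_fst (g t)). pose proof (eucl_snd (g t)).
      apply Rabs_le_inv2 in H0. apply Rabs_le_inv2 in H1. split; split; lra. }
  assert (Hdiam : Rbar_le (diam K) B).
  { apply (Lub_Rbar_correct (fun d => d = 0 \/ exists p q, K p /\ K q /\ d = eucl (vsub p q))).
    intros s [->|[p [q [Hp [Hq ->]]]]]; simpl; unfold B.
    - apply Rmax_l.
    - eapply Rle_trans; [|apply Rmax_r].
      eapply Rle_trans; [apply eucl_le_l1|].
      destruct (HKsq p Hp) as [[P1 P2] [P3 P4]]. destruct (HKsq q Hq) as [[Q1 Q2] [Q3 Q4]].
      unfold vsub; simpl.
      assert (Rabs (fst p - fst q) <= 2 * M) by (apply Rabs_le; lra).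
      assert (Rabs (snd p - snd q) <= 2 * M) by (apply Rabs_le; lra). lra. }
  assert (H0d : Rbar_le 0 (diam K)).
  { apply (Lub_Rbar_correct (fun d => d = 0 \/ exists p q, K p /\ K q /\ d = eucl (vsub p q))). auto. }
  assert (H0l : Rbar_le 0 (curve_length I g)).
  { apply (Lub_Rbar_correct (fun s => exists l : list R,
        StronglySorted Rlt l /\ List.Forall (fun t : R => I t) l /\ s = poly_sum g l)).
    exists nil. split; [constructor|]. split; [constructor|]. reflexivity. }
  pose proof (Part1 I g HI HSC) as HP. fold K in HP.
  destruct (diam K) as [d| |]; simpl in Hdiam, H0d; try contradiction.
  simpl in HP.
  destruct (curve_length I g); simpl in *; try contradiction; reflexivity.
Qed.
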